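(* Let $\bar q=(q^2-1)/2$, and define $f$ on residues $t$ modulo $q^2-1$ with $t\not\equiv\bar q$ by the condition $\xi^{-t}+\xi^{f(t)}=-1$; then $f$ is a bijection from the residues $\not\equiv\bar q$ onto themselves. Let $j$ be an integer with $1\le j\le q$. For $t\in\{0,1,\dots,q-2\}$ put $e(t)=f^{-1}(t(q+1)-j)$, a residue modulo $q^2-1$, hence a well-defined residue modulo $q+1$. Then: - the $q-1$ residues $e(0),\dots,e(q-2)$ modulo $q+1$ are pairwise distinct; - none of them is congruent to $0$ or to $j$ modulo $q+1$.
   Context: Let $q$ be an odd prime power, $F=\mathrm{GF}(q^2)$, and let $\xi$ be a fixed primitive element of $F$ (so that $\xi^{\bar q}=-1$). *)

(* Defs.v *)
From mathcomp Require Import all_boot all_order all_algebra all_field.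
Set Implicit Arguments. Unset Strict Implicit. Unset Printing Implicit Defensive.
Import GRing.Theory.
Local Open Scope ring_scope.

(* Residues modulo n are represented by their canonical representatives in
   [0, n) (natural numbers). *)

Definition qbar (q : nat) : nat := ((q ^ 2 - 1) %/ 2)%N.

Definition fdom (n qb : nat) : pred nat := fun t => (t < n)%N && (t != qb).

Definition fmap (F : fieldType) (xi : F) (n t : nat) : nat :=
  if [pick u : 'I_n | xi ^- t + xi ^+ u == -1] is Some u then val u else 0%N.

Definition finv (F : fieldType) (xi : F) (n qb u : nat) : nat :=
  if [pick t : 'I_n | (val t != qb) && (fmap xi n t == u)] is Some t
  then val t else 0%N.

(* e(t) = f^{-1}(t(q+1) - j), where the argument is reduced mod n = q^2-1
   (we add n to avoid truncated subtraction; j <= q <= n). *)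
Definition eres (F : fieldType) (xi : F) (q j t : nat) : nat :=
  let n := (q ^ 2 - 1)%N in
  finv xi n (qbar q) ((t * (q + 1) + (n - j)) %% n).

(* Main.v *)
Require Import Defs.
From mathcomp Require Import all_boot all_order all_algebra all_field.
From mathcomp Require Import zify ring.
Import GRing.Theory.
Local Open Scope ring_scope.

Lemma L1 {q} : (1 < q)%N -> (q < (q + 1) * (q - 1))%N.
Proof. move=> h. nia. Qed.
Lemma L2 {q j} : (1 < q)%N -> (1 <= j <= q)%N -> (0 < j * (q - 1) < (q + 1) * (q - 1))%N.
Proof. move=> h /andP[h1 h2]. nia. Qed.
Lemma L3 {q t} : (1 < q)%N -> (t <= q - 2)%N -> (t < q - 1)%N.
Proof. lia. Qed.
Lemma L4 {q j} : (1 < q)%N -> (1 <= j <= q)%N -> (j <= (q + 1) * (q - 1))%N.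
Proof. move=> h h2; have := L1 h; lia. Qed.

Section Aux.
Variables (F : finFieldType) (q : nat) (xi : F).
Hypothesis hq1 : (1 < q)%N.
Hypothesis hch : ([char F]%R).-nat q.
Hypothesis HF : #|F| = (q ^ 2)%N.
Hypothesis Hxi : (q ^ 2 - 1).-primitive_root xi.

Local Notation n := (q ^ 2 - 1)%N.

Definition inK (x : F) := x ^+ q == x.

Lemma inKD {x y} : inK x -> inK y -> inK (x + y).
Proof. by rewrite /inK exprDn_pchar // => /eqP-> /eqP->. Qed.
Lemma inKN {x} : inK x -> inK (- x).
Proof. by rewrite /inK exprNn_pchar // => /eqP->. Qed.
Lemma inKM {x y} : inK x -> inK y -> inK (x * y).
Proof. by rewrite /inK exprMn => /eqP-> /eqP->. Qed.
Lemma inKV {x} : inK x -> inK (x^-1).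
Proof. by rewrite /inK exprVn => /eqP->. Qed.
Lemma inK1 : inK 1.
Proof. by rewrite /inK expr1n. Qed.

Lemma inK_pow x : x != 0 -> inK x = (x ^+ (q - 1) == 1).
Proof.
move=> x0; rewrite /inK -{1}(subnK (ltnW hq1)) exprD expr1.
apply/eqP/eqP => [h|->]; last by rewrite mul1r.
by apply: (mulIf x0); rewrite mul1r.
Qed.

Lemma n_gt0 : (0 < n)%N.
Proof. rewrite subn_gt0; nia. Qed.

Lemma n_fact : n = ((q + 1) * (q - 1))%N.
Proof. by rewrite -{2}(exp1n 2) subn_sqr mulnC. Qed.

Lemma xi_neq0 : xi != 0.
Proof.
apply/eqP=> x0; have := prim_expr_order Hxi; rewrite x0 expr0n eqn0Ngt n_gt0 /= => /eqP; rewrite eq_sym oner_eq0 //.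
Qed.

Lemma expxi_neq0 k : xi ^+ k != 0.
Proof. by rewrite expf_neq0 // xi_neq0. Qed.

Lemma nonzero_pow {x} : x != 0 -> {i : 'I_n | x = xi ^+ i}.
Proof.
move=> x0; apply: prim_rootP => //.
apply: (mulIf x0); rewrite mul1r -exprSr subn1 prednK; last by nia.
by rewrite -HF expf_card.
Qed.

Lemma xi_inj {a b : nat} : (a < n)%N -> (b < n)%N -> xi ^+ a = xi ^+ b -> a = b.
Proof.
move=> ha hb /eqP; rewrite (eq_prim_root_expr Hxi) !modn_small //. by move/eqP.
Qed.

Hypothesis Hqodd : odd q.

Lemma qb_lt : (0 < qbar q < n)%N.
Proof.
have e : (qbar q * 2)%N = n.
  by rewrite /qbar divnK // n_fact dvdn_mulr // dvdn2 oddD Hqodd.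
have := n_gt0; rewrite -e; lia.
Qed.

Lemma xi_qb : xi ^+ qbar q = -1.
Proof.
have e : (qbar q * 2)%N = n.
  by rewrite /qbar divnK // n_fact dvdn_mulr // dvdn2 oddD Hqodd.
have : (xi ^+ qbar q) ^+ 2 == 1 by rewrite -exprM e prim_expr_order.
rewrite sqrf_eq1 => /orP[/eqP h|/eqP //].
have [q0 q1] := andP qb_lt.
have := xi_inj q1 n_gt0 (etrans h (esym (expr0 xi))); lia.
Qed.

Lemma xi_eqN1 {t} : (t < n)%N -> xi ^+ t = -1 -> t = qbar q.
Proof. by move=> ht h; apply: xi_inj => //; [case/andP: qb_lt|rewrite xi_qb]. Qed.

Lemma fmapP {t} : (t < n)%N -> t != qbar q ->
  xi ^- t + xi ^+ fmap xi n t = -1 /\ (fmap xi n t < n)%N.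
Proof.
move=> ht hq; rewrite /fmap; case: pickP => [u /eqP h | none]; first by split; [|exact: ltn_ord].
have nz : -1 - xi ^- t != 0.
  rewrite subr_eq0; apply/negP => /eqP h.
  have : xi ^+ t = -1 by rewrite -[xi ^+ t]invrK -h invrN1.
  by move/(xi_eqN1 ht); apply/eqP.
have [u hu] := nonzero_pow nz.
by have := none u; rewrite -hu addrC subrK eqxx.
Qed.

Lemma fmap_D {t} : (t < n)%N -> t != qbar q ->
  (fmap xi n t < n)%N /\ fmap xi n t != qbar q.
Proof.
move=> ht hq; have [h1 h2] := fmapP ht hq; split => //; apply/eqP => e.
move: h1; rewrite e xi_qb => h1.
have : xi ^- t = 0 by apply: (addIr (-1)); rewrite add0r.
by move/eqP; rewrite invr_eq0 (negbTE (expxi_neq0 _)).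
Qed.

Lemma fmap_inj {t1 t2} : (t1 < n)%N -> t1 != qbar q -> (t2 < n)%N -> t2 != qbar q ->
  fmap xi n t1 = fmap xi n t2 -> t1 = t2.
Proof.
move=> h1 q1 h2 q2 e; have [e1 _] := fmapP h1 q1; have [e2 _] := fmapP h2 q2.
apply: xi_inj => //; apply: invr_inj.
by apply: (addIr (xi ^+ fmap xi n t1)); rewrite e1 e e2.
Qed.

Lemma fmap_surj {u} : (u < n)%N -> u != qbar q ->
  exists t, [/\ (t < n)%N, t != qbar q & fmap xi n t = u].
Proof.
move=> hu qu.
have nz : (-1 - xi ^+ u)^-1 != 0.
  rewrite invr_eq0 subr_eq0; apply/negP => /eqP h.
  by move/eqP: qu; apply; apply: xi_eqN1 hu _; rewrite -h.
have [t ht] := nonzero_pow nz.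
have ey : xi ^- t = -1 - xi ^+ u by rewrite -ht invrK.
have qt : (t : nat) != qbar q.
  apply/eqP => e; move: ey; rewrite e xi_qb invrN1 => /eqP.
  rewrite eq_sym subr_eq addrC -subr_eq subrr eq_sym.
  by rewrite (negbTE (expxi_neq0 _)).
exists t; split => //.
have [e1 hl] := fmapP (ltn_ord t) qt.
apply: xi_inj => //; apply: (addrI (xi ^- t)); rewrite e1 ey; ring.
Qed.

Lemma finvP {u} : (u < n)%N -> u != qbar q ->
  [/\ (Defs.finv xi n (qbar q) u < n)%N, Defs.finv xi n (qbar q) u != qbar q &
      fmap xi n (Defs.finv xi n (qbar q) u) = u].
Proof.
move=> hu qu; rewrite /Defs.finv; case: pickP => [t /andP[h1 /eqP h2] | none].
  by split; rewrite ?ltn_ord.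
have [t [ht qt et]] := fmap_surj hu qu.
by have := none (Ordinal ht); rewrite /= qt et eqxx.
Qed.

Variable j : nat.
Hypothesis Hj : (1 <= j <= q)%N.

Definition zeta := xi ^+ (n - j).

Lemma zeta_neq0 : zeta != 0.
Proof. exact: expxi_neq0. Qed.

Lemma zeta_notK : ~~ inK zeta.
Proof.
rewrite inK_pow ?zeta_neq0 // /zeta -exprM -(expr0 xi) (eq_prim_root_expr Hxi) mod0n.
rewrite -/(dvdn n _); apply/negP => hd.
have e : ((n - j) * (q - 1) + j * (q - 1) = n * (q - 1))%N.
  by rewrite -mulnDl subnK // n_fact L4.
have : (n %| j * (q - 1))%N by rewrite -(dvdn_addr _ hd) e dvdn_mulr.
have [h0 hlt] := andP (L2 hq1 Hj); rewrite n_fact in hlt *.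
by move/(dvdn_leq h0); rewrite leqNgt hlt.
Qed.

Lemma a_inK t : inK (xi ^+ (t * (q + 1))).
Proof.
rewrite inK_pow ?expxi_neq0 // -exprM -mulnA -n_fact (mulnC t) exprM.
by rewrite (prim_expr_order Hxi) expr1n.
Qed.

Lemma indep {u v} : inK u -> inK v -> u + v * zeta = 0 -> u = 0 /\ v = 0.
Proof.
move=> hu hv h; case: (eqVneq v 0) => [v0|nv].
  by move: h; rewrite v0 mul0r addr0.
have e : v * zeta = - u by rewrite -[LHS]add0r -(addNr u) -addrA h addr0.
have ez : zeta = v^-1 * (- u) by rewrite -e mulKf.
by move: zeta_notK; rewrite ez inKM ?inKV ?inKN.
Qed.

Lemma m_props t : let m := ((t * (q + 1) + (n - j)) %% n)%N in
  [/\ (m < n)%N, m != qbar q & xi ^+ m = xi ^+ (t * (q + 1)) * zeta].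
Proof.
move=> m.
have em : xi ^+ m = xi ^+ (t * (q + 1)) * zeta by rewrite /m prim_expr_mod // exprD.
split => //; first by rewrite /m ltn_mod n_gt0.
apply/eqP => e; move: em; rewrite e xi_qb => em.
have ez : zeta = - (xi ^+ (t * (q + 1)))^-1.
  by apply: (mulfI (expxi_neq0 (t * (q + 1)))); rewrite -em mulrN mulfV ?expxi_neq0.
by move: zeta_notK; rewrite ez inKN ?inKV ?a_inK.
Qed.

Lemma eresP t : (eres xi q j t < n)%N /\
  xi ^- eres xi q j t = -1 - xi ^+ (t * (q + 1)) * zeta.
Proof.
rewrite /eres /=; have [hm qm em] := m_props t.
have [h1 h2 h3] := finvP hm qm; have [e1 _] := fmapP h1 h2.
rewrite h3 em in e1; split => //.
by rewrite -e1 addrK.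
Qed.

Lemma eres_dist t1 t2 : (t1 <= q - 2)%N -> (t2 <= q - 2)%N ->
  eres xi q j t1 = eres xi q j t2 %[mod q + 1] -> t1 = t2.
Proof.
move=> ht1 ht2 h.
have [hs1 y1] := eresP t1; have [hs2 y2] := eresP t2.
move: y1 y2 h; set s1 := eres xi q j t1; set s2 := eres xi q j t2 => y1 y2 h.
set a := xi ^+ (t1 * (q + 1)) in y1; set b := xi ^+ (t2 * (q + 1)) in y2.
have hz : xi ^+ s1 ^+ (q - 1) = xi ^+ s2 ^+ (q - 1).
  by rewrite -!exprM; apply/eqP; rewrite (eq_prim_root_expr Hxi) n_fact -!muln_modl h.
pose c := xi ^+ s1 / xi ^+ s2.
have cK : inK c.
  rewrite inK_pow; last by rewrite mulf_neq0 ?invr_eq0 ?expxi_neq0.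
  by rewrite exprMn exprVn hz mulfV // expf_neq0 // expxi_neq0.
have e : -1 - b * zeta = c * (-1 - a * zeta).
  rewrite -y1 -y2 /c mulrAC mulfV ?mul1r //; exact: expxi_neq0.
have e2 : (c - 1) + (c * a - b) * zeta = 0.
  transitivity (-(c * (-1 - a * zeta) - (-1 - b * zeta))); first ring.
  by rewrite e subrr oppr0.
have [c1 cab] := indep (inKD cK (inKN inK1)) (inKD (inKM cK (a_inK _)) (inKN (a_inK _))) e2.
move/eqP: c1; rewrite subr_eq0 => /eqP c1.
move/eqP: cab; rewrite c1 mul1r subr_eq0 /a /b => /eqP/eqP.
rewrite (eq_prim_root_expr Hxi) n_fact [((q + 1) * (q - 1))%N]mulnC -!muln_modl.
rewrite eqn_pmul2r ?addn1 // !modn_small; [by move/eqP| exact: L3 | exact: L3].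
Qed.

Lemma eres_not t :
  (eres xi q j t %% (q + 1) != 0)%N /\
  (eres xi q j t %% (q + 1) != j %% (q + 1))%N.
Proof.
have [hs y] := eresP t; move: y; set s := eres xi q j t => y.
set a := xi ^+ (t * (q + 1)) in y.
have a0 : a != 0 by exact: expxi_neq0.
split; apply/negP => /eqP h.
  have : xi ^+ s ^+ (q - 1) = 1.
    rewrite -exprM -(expr0 xi); apply/eqP.
    by rewrite (eq_prim_root_expr Hxi) n_fact -muln_modl h mul0n mod0n.
  move/eqP; rewrite -inK_pow ?expxi_neq0 // => /inKV; rewrite y => yK.
  have e2 : (-1 - (-1 - a * zeta)) + (- a) * zeta = 0 by ring.
  have [_ ] := indep (inKD (inKN inK1) (inKN yK)) (inKN (a_inK _)) e2.
  by move/eqP; rewrite oppr_eq0 (negbTE a0).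
pose c := xi ^+ s * zeta.
have c0 : c != 0 by rewrite mulf_neq0 ?zeta_neq0 ?expxi_neq0.
have cK : inK c.
  rewrite (inK_pow _ c0) exprMn -!exprM /zeta.
  have -> : xi ^+ (s * (q - 1)) = xi ^+ (j * (q - 1)).
    by apply/eqP; rewrite (eq_prim_root_expr Hxi) n_fact -!muln_modl h.
  rewrite -exprD -mulnDl subnKC; last by rewrite n_fact L4.
  by rewrite exprM (prim_expr_order Hxi) expr1n.
have e : c * (-1 - a * zeta) = zeta.
  by rewrite -y /c mulrAC mulfV ?mul1r // expxi_neq0.
have e2 : (- c) + (- c * a - 1) * zeta = 0.
  transitivity (c * (-1 - a * zeta) - zeta); first ring.
  by rewrite e subrr.
have [hc _] := indep (inKN cK) (inKD (inKM (inKN cK) (a_inK _)) (inKN inK1)) e2.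
by move/eqP: hc; rewrite oppr_eq0 (negbTE c0).
Qed.

End Aux.

Theorem lemma8 (q : nat) (Hqodd : odd q)
  (Hqpp : exists p k : nat, [/\ prime p, (0 < k)%N & q = (p ^ k)%N])
  (F : finFieldType) (HF : #|F| = (q ^ 2)%N)
  (xi : F) (Hxi : (q ^ 2 - 1).-primitive_root xi)
  (j : nat) (Hj : (1 <= j <= q)%N) :
  let n := (q ^ 2 - 1)%N in
  let D := fdom n (qbar q) in
  (* f is a bijection of the residues not congruent to qbar *)
  [/\ {in D, forall t, fmap xi n t \in D},
      {in D &, injective (fmap xi n)},
      {in D, forall u, exists2 t, t \in D & fmap xi n t = u},
  (* the residues e(0), ..., e(q-2) modulo q+1 are pairwise distinct *)
      (forall t1 t2 : nat, (t1 <= q - 2)%N -> (t2 <= q - 2)%N ->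
         eres xi q j t1 = eres xi q j t2 %[mod q + 1] -> t1 = t2) &
  (* none of them is congruent to 0 or j modulo q+1 *)
      (forall t : nat, (t <= q - 2)%N ->
         (eres xi q j t %% (q + 1) != 0)%N /\
         (eres xi q j t %% (q + 1) != j %% (q + 1))%N)].
Proof.
have [p [k [pp k0 qe]]] := Hqpp.
have chp : p \in [char F].
  by apply: (card_finPcharP (n := (k * 2)%N)) => //; rewrite HF qe -expnM.
have hch : ([char F]%R).-nat q.
  by rewrite (eq_pnat _ (pcharf_eq chp)) qe pnatX pnat_id.
have hq1 : (1 < q)%N.
  have : (p ^ 1 <= p ^ k)%N by rewrite leq_exp2l ?prime_gt1.
  rewrite -qe expn1 => h; exact: leq_trans (prime_gt1 pp) h.
move=> n D.
have inD t : (t \in D) = (t < n)%N && (t != qbar q) by [].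
split.
- move=> t; rewrite !inD => /andP[h1 h2].
  by have [-> ->] := (@fmap_D F q xi hq1 hch HF Hxi Hqodd t h1 h2).
- move=> t1 t2; rewrite !inD => /andP[h1 h2] /andP[h3 h4].
  exact: (@fmap_inj F q xi hq1 hch HF Hxi Hqodd t1 t2 h1 h2 h3 h4).
- move=> u; rewrite inD => /andP[h1 h2].
  have [t [ht qt et]] := (@fmap_surj F q xi hq1 hch HF Hxi Hqodd u h1 h2).
  by exists t; rewrite ?inD ?ht ?qt.
- move=> t1 t2; exact: (@eres_dist F q xi hq1 hch HF Hxi Hqodd j Hj t1 t2).
- move=> t _; exact: (@eres_not F q xi hq1 hch HF Hxi Hqodd j Hj t).
Qed.
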